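(* Let $p, q$ be integers with $p, q \ge 2$. Then for every $\lambda \in \Lambda^{p,q}_{+}$, \[ \mathcal{F}(\lambda; \Lambda^{p,q}) \simeq \begin{cases} \mathcal{F}(T^{p,q}_{2,2}(\lambda); \Lambda^{2,2}) & \text{if } \lambda \in \operatorname{Fix}(T^{2,2}_{p,q} \circ T^{p,q}_{2,2}),\\ \mathrm{pt} & \text{otherwise,} \end{cases} \] where $\simeq$ denotes homotopy equivalence and $\mathrm{pt}$ the one-point space.
   Context: $\mathbb{N}=\{0,1,2,\dots\}$. For an additive commutative monoid $\Lambda$ that is cancellative and has no non-trivial invertible elements, define the partial order $\lambda \le \mu$ iff there is $\nu\in\Lambda$ with $\lambda+\nu=\mu$; write $\lambda<\mu$ for $\lambda\le\mu$, $\lambda\ne\mu$. Let $\Lambda_+=\Lambda\setminus\{0\}$. For a poset $P$, $|P|$ denotes the geometric realization of its order complex (simplices are the finite nonempty chains), and $(x,y)_P=\{z\in P: x<z<y\}$. The Frobenius complex is $\mathcal{F}(\lambda;\Lambda)=|(0,\lambda)_\Lambda|$ for $\lambda\in\Lambda_+$. For positive integers $p,q$, $\Lambda^{p,q}=\langle a,b\mid pa=qb\rangle$ is the quotient of the free commutative monoid $\mathbb{N}a\oplus\mathbb{N}b$ by the congruence generated by $\lambda+pa\sim\lambda+qb$ ($\lambda\in\mathbb{N}a\oplus\mathbb{N}b$). For positive integers $p,q$, the transition function $\tau^p_q:\mathbb{N}\to\mathbb{N}$ is $\tau^p_q(mp+n)=mq+\min\{n,q-1\}$ for $m\in\mathbb{N}$,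 $0\le n<p$. For positive integers $p,q,r,s$, the transition map $T^{p,q}_{r,s}:\Lambda^{p,q}\to\Lambda^{r,s}$ is $T^{p,q}_{r,s}(ma+nb)=\tau^p_r(m)a+\tau^q_s(n)b$ ($m,n\in\mathbb{N}$). For a function $f$ on a set $X$, $\operatorname{Fix} f=\{x\in X: f(x)=x\}$. *)

(* Defs.v *)
From Stdlib Require Import Relation_Operators.
From HB Require Import structures.
From mathcomp Require Import all_boot all_order all_algebra.
From mathcomp Require Import all_classical all_reals all_analysis.
Import numFieldNormedType.Exports.
Import Order.TTheory GRing.Theory Num.Theory.
Import ArrowAsProduct.

Set Implicit Arguments.
Unset Strict Implicit.
Unset Printing Implicit Defensive.

Local Open Scope classical_set_scope.
Local Open Scope ring_scope.

(** Free commutative monoid N a (+) N b, an element m a + n b is (m, n). *)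
Definition freeM := (nat * nat)%type.
Definition addF (x y : freeM) : freeM := ((x.1 + y.1)%N, (x.2 + y.2)%N).

Definition stepF (p q : nat) (x y : freeM) : Prop :=
  exists l : freeM, x = addF l (p, 0%N) /\ y = addF l (0%N, q).

(** The congruence generated: its equivalence closure (the generating
    relation is already translation invariant). *)
Definition congF (p q : nat) : freeM -> freeM -> Prop :=
  clos_refl_sym_trans freeM (stepF p q).

Definition Lam (p q : nat) := {S : set freeM | exists x, S = congF p q x}.

HB.instance Definition _ (p q : nat) := gen_eqMixin (Lam p q).
HB.instance Definition _ (p q : nat) := gen_choiceMixin (Lam p q).

Definition clsL (p q : nat) (x : freeM) : Lam p q :=
  exist _ (congF p q x) (ex_intro _ x erefl).

Definition repL (p q : nat) (a : Lam p q) : freeM := projT1 (cid (proj2_sig a)).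

Definition zeroL (p q : nat) : Lam p q := clsL p q (0%N, 0%N).
Definition addL (p q : nat) (a b : Lam p q) : Lam p q :=
  clsL p q (addF (repL a) (repL b)).

Arguments zeroL p q : clear implicits.
Arguments clsL p q x : clear implicits.

Definition leL (p q : nat) (a b : Lam p q) : Prop := exists c, addL a c = b.
Definition ltL (p q : nat) (a b : Lam p q) : Prop := leL a b /\ a <> b.

Definition ointL (p q : nat) (x y : Lam p q) : set (Lam p q) :=
  [set z | ltL x z /\ ltL z y].

Definition tau (p q : nat) (k : nat) : nat :=
  ((k %/ p) * q + minn (k %% p) (q - 1))%N.

Definition Tmap (p q r s : nat) (a : Lam p q) : Lam r s :=
  clsL r s (tau p r (repL a).1, tau q s (repL a).2).

Arguments Tmap p q r s a : clear implicits.

(** * Geometric realization of the order complex of a poset (P, le),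
    realized inside R^V (product topology): the points are the weight
    functions w >= 0 supported in P, of total weight 1, whose support
    is a chain.  (For finite P this is the usual geometric realization.) *)
Definition realization (R : realType) (V : choiceType) (le : V -> V -> Prop)
    (P : set V) : set (V -> R) :=
  [set w | (forall v, 0 <= w v) /\ (forall v, ~ P v -> w v = 0) /\
           (\sum_(v \in P) w v = 1) /\
           (forall u v, 0 < w u -> 0 < w v -> le u v \/ le v u)].

Arguments realization R {V} le P.

Definition Frob (R : realType) (p q : nat) (lam : Lam p q) : set (Lam p q -> R) :=
  realization R (@leL p q) (ointL (zeroL p q) lam).

Arguments Frob R {p q} lam.

Definition unitI (R : realType) : set R := [set t | 0 <= t <= 1].

Arguments unitI R : clear implicits.

Definition homotopic_on (R : realType) (S T : topologicalType)
    (X : set S) (Y : set T) (f g : S -> T) : Prop :=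
  exists H : S * R -> T,
    {within X `*` (unitI R), continuous H} /\
    (forall x t, X x -> unitI R t -> Y (H (x, t))) /\
    (forall x, X x -> H (x, 0) = f x) /\
    (forall x, X x -> H (x, 1) = g x).

Definition homotopy_equivalent (R : realType) (S T : topologicalType)
    (X : set S) (Y : set T) : Prop :=
  exists (f : S -> T) (g : T -> S),
    {within X, continuous f} /\ (f @` X `<=` Y) /\
    {within Y, continuous g} /\ (g @` Y `<=` X) /\
    homotopic_on R X X (g \o f) id /\ homotopic_on R Y Y (f \o g) id.

Definition pt (R : realType) : set R := [set 0].
Arguments pt R : clear implicits.

(* Main.v *)
Require Import Defs.
From Stdlib Require Import Relation_Operators.
From mathcomp Require Import all_boot all_order all_algebra.
From mathcomp Require Import all_classical all_reals all_analysis.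
From mathcomp Require Import zify finmap lra.
Import numFieldNormedType.Exports.
Import ArrowAsProduct.
Import Order.TTheory GRing.Theory Num.Theory.

Set Implicit Arguments.
Unset Strict Implicit.
Unset Printing Implicit Defensive.


Lemma exist_eqP (A : Type) (P : A -> Prop) a b (ha : P a) (hb : P b) :
  a = b -> exist P a ha = exist P b hb.
Proof. by move=> e; subst; congr exist; exact: Prop_irrelevance. Qed.

Section Lam.
Variables (p q : nat).
Hypotheses (p0 : (0 < p)%N) (q0 : (0 < q)%N).

Definition degF (x : freeM) : nat := (q * x.1 + p * x.2)%N.

Lemma congF_refl x : congF p q x x.
Proof. exact: rst_refl. Qed.
Lemma congF_sym x y : congF p q x y -> congF p q y x.
Proof. exact: rst_sym. Qed.
Lemma congF_trans x y z : congF p q x y -> congF p q y z -> congF p q x z.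
Proof. exact: rst_trans. Qed.

Lemma congF_deg x y : congF p q x y -> degF x = degF y.
Proof.
elim => //.
- move=> a b [l [-> ->]]; rewrite /degF /addF /=; lia.
- by move=> a b c _ -> _ ->.
Qed.

Lemma congF_add x y z : congF p q x y -> congF p q (addF x z) (addF y z).
Proof.
elim.
- move=> a b [l [-> ->]]; apply: rst_step; exists (addF l z).
  rewrite /addF /=; split; congr pair; lia.
- move=> a; exact: rst_refl.
- move=> a b _ h; exact: rst_sym.
- move=> a b c _ h1 _ h2; exact: rst_trans h1 h2.
Qed.

Lemma addFC x y : addF x y = addF y x.
Proof. by rewrite /addF addnC [(x.2 + _)%N]addnC. Qed.

Lemma congF_add2 x y x' y' : congF p q x x' -> congF p q y y' ->
  congF p q (addF x y) (addF x' y').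
Proof.
move=> h1 h2; apply: congF_trans (congF_add y h1) _.
rewrite addFC [addF x' y']addFC; exact: congF_add.
Qed.

Lemma clsL_eq x y : congF p q x y -> clsL p q x = clsL p q y.
Proof.
move=> h; rewrite /clsL.
have E : congF p q x = congF p q y.
  apply/funext => z; apply/propext; split => hz.
  - exact: congF_trans (congF_sym h) hz.
  - exact: congF_trans h hz.
exact: exist_eqP.
Qed.

Lemma clsL_inj x y : clsL p q x = clsL p q y -> congF p q x y.
Proof.
move=> /(congr1 (@proj1_sig _ _)) /= E.
by rewrite E; exact: congF_refl.
Qed.

Lemma repLK (a : Lam p q) : clsL p q (repL a) = a.
Proof.
rewrite /repL; case: cid => x /= e.
case: a e => S hS /= e; subst S; congr exist; exact: Prop_irrelevance.
Qed.

Lemma LamP (a : Lam p q) : exists x, a = clsL p q x.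
Proof. by exists (repL a); rewrite repLK. Qed.

Lemma repL_cls x : congF p q (repL (clsL p q x)) x.
Proof. by apply: clsL_inj; rewrite repLK. Qed.

Definition degL (a : Lam p q) := degF (repL a).

Lemma degL_cls x : degL (clsL p q x) = degF x.
Proof. exact: congF_deg (repL_cls x). Qed.

Lemma addL_cls x y : addL (clsL p q x) (clsL p q y) = clsL p q (addF x y).
Proof. by apply: clsL_eq; apply: congF_add2; exact: repL_cls. Qed.

Lemma leL_le x y : (x.1 <= y.1)%N -> (x.2 <= y.2)%N -> leL (clsL p q x) (clsL p q y).
Proof.
move=> h1 h2; exists (clsL p q ((y.1 - x.1)%N, (y.2 - x.2)%N)).
rewrite addL_cls /addF /=; congr clsL.
case: y h1 h2 => a b /= h1 h2; congr pair; lia.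
Qed.

Lemma leLP (a b : Lam p q) : leL a b ->
  exists x y, [/\ a = clsL p q x, b = clsL p q y, (x.1 <= y.1)%N & (x.2 <= y.2)%N].
Proof.
move=> [c <-]; have [x ->] := LamP a; have [u ->] := LamP c.
exists x, (addF x u); rewrite addL_cls; split => //=; lia.
Qed.

Lemma leL_refl (a : Lam p q) : leL a a.
Proof. by have [x ->] := LamP a; apply: leL_le. Qed.

Lemma leL_trans (a b c : Lam p q) : leL a b -> leL b c -> leL a c.
Proof.
move=> [u <-] [v <-].
have [x ->] := LamP a; have [y ->] := LamP u; have [z ->] := LamP v.
exists (clsL p q (addF y z)); rewrite !addL_cls; congr clsL.
by rewrite /addF /=; congr pair; lia.
Qed.

Lemma degL_lt (a b : Lam p q) : leL a b -> a <> b -> (degL a < degL b)%N.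
Proof.
move=> [u <-] ne.
have [x ex] := LamP a; have [y ey] := LamP u.
move: ne; rewrite ex ey addL_cls !degL_cls /degF /addF /= => ne.
have [y0|yn] := pselect (y = (0%N, 0%N)).
  by exfalso; apply: ne; rewrite y0; case: x {ex} => ? ?; rewrite /= !addn0.
have : (0 < q * y.1 + p * y.2)%N.
  clear ne; case: y {ey} yn => [[|y1] [|y2]] //= _; nia.
lia.
Qed.

Lemma leL_antisym (a b : Lam p q) : leL a b -> leL b a -> a = b.
Proof.
move=> h1 h2; apply: contrapT => ne.
have := degL_lt h1 ne; have := degL_lt h2 (nesym ne); lia.
Qed.

Lemma zero_le (a : Lam p q) : leL (zeroL p q) a.
Proof.
have [x ->] := LamP a; apply: leL_le => /=; lia.
Qed.

Lemma degL_le (a b : Lam p q) : leL a b -> (degL a <= degL b)%N.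
Proof.
move=> h; have [->//|ne] := pselect (a = b); exact: ltnW (degL_lt h ne).
Qed.

Lemma degL0 x : degF x = 0%N -> x = (0%N, 0%N).
Proof.
case: x => a b; rewrite /degF /= => h.
have ha : a = 0%N by nia.
have hb : b = 0%N by nia.
by rewrite ha hb.
Qed.

Lemma finite_below (l : Lam p q) : finite_set [set m | leL m l].
Proof.
pose D := degL l.
apply: (@sub_finite_set _ _ (clsL p q @` (`I_D.+1 `*` `I_D.+1))).
  move=> m hm; exists (repL m); last exact: repLK.
  have := degL_le hm; rewrite /degL /degF /=.
  have hp : (1 <= p)%N by []. have hq : (1 <= q)%N by [].
  rewrite /D /degL /degF; split => /=; nia.
apply: finite_image; apply: finite_setX; exact: finite_II.
Qed.

End Lam.


Lemma tau_eq p r a b : (b < p)%N -> tau p r (a * p + b) = (a * r + minn b (r - 1))%N.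
Proof.
move=> bp; have p0 : (0 < p)%N by case: p bp.
rewrite /tau divnMDl // divn_small // addn0; congr (_ + minn _ _)%N.
by rewrite modnMDl modn_small.
Qed.

Lemma tau_split p r m : (0 < p)%N -> tau p r m = tau p r (m %/ p * p + m %% p).
Proof. by move=> _; rewrite -divn_eq. Qed.

Lemma tau_shift p r m : (0 < p)%N -> tau p r (m + p) = (tau p r m + r)%N.
Proof.
move=> p0; rewrite (divn_eq m p).
have hb := ltn_pmod m p0.
rewrite (_ : (m %/ p * p + m %% p + p = (m %/ p).+1 * p + m %% p)%N); last first.
  rewrite mulSn; lia.
rewrite !tau_eq // mulSn; lia.
Qed.

Lemma tau_mono p r m m' : (0 < p)%N -> (m <= m')%N -> (tau p r m <= tau p r m')%N.
Proof.
move=> p0 le; rewrite (divn_eq m p) (divn_eq m' p) !tau_eq ?ltn_pmod //.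
have ha := leq_div2r p le.
have hb := ltn_pmod m p0; have hb' := ltn_pmod m' p0.
have e1 := divn_eq m p; have e2 := divn_eq m' p.
set a := m %/ p in ha hb e1 *; set a' := m' %/ p in ha hb' e2 *.
set b := m %% p in hb e1 *; set b' := m' %% p in hb' e2 *.
have [eaa|naa] := eqVneq a a'.
  rewrite -eaa; rewrite -eaa in e2; lia.
have lt : (a < a')%N by rewrite ltn_neqAle naa ha.
have : (a.+1 * r <= a' * r)%N by rewrite leq_mul2r lt orbT.
rewrite mulSn.
lia.
Qed.

Lemma tau_c1 p m : (2 <= p)%N -> (tau 2 p (tau p 2 m) <= m)%N.
Proof.
move=> p2; have p0 : (0 < p)%N by lia.
rewrite (divn_eq m p) tau_eq ?ltn_pmod //.
have hb := ltn_pmod m p0.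
set a := m %/ p; set b := m %% p.
have [b0|bp] := eqVneq b 0%N.
  rewrite b0 (_ : minn 0 (2 - 1) = 0)%N // addn0.
  rewrite -[(a * 2)%N]addn0 tau_eq //; lia.
rewrite (_ : minn b (2 - 1) = 1)%N; last lia.
rewrite tau_eq //; lia.
Qed.

Lemma tau_c2 p m : (2 <= p)%N -> tau p 2 (tau 2 p m) = m.
Proof.
move=> p2; have p0 : (0 < p)%N by lia.
rewrite [in RHS](divn_eq m 2) tau_eq ?ltn_pmod //.
have hb := ltn_pmod m (isT : (0 < 2)%N).
set a := m %/ 2; set b := m %% 2.
rewrite (_ : minn b (p - 1) = b); last lia.
all: lia.
Qed.

Lemma tau0 p r m : (0 < p)%N -> (2 <= r)%N -> tau p r m = 0%N -> m = 0%N.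
Proof.
move=> p0 r2; rewrite (divn_eq m p) tau_eq ?ltn_pmod //.
have hb := ltn_pmod m p0.
set a := m %/ p; set b := m %% p => h.
have h1 : (a * r = 0)%N by lia.
have h2 : b = 0%N by lia.
move/eqP: h1; rewrite muln_eq0 => /orP [/eqP ->|/eqP]; last lia.
by rewrite h2.
Qed.

Section Tm.
Variables (p q r s : nat).
Hypotheses (p0 : (0 < p)%N) (q0 : (0 < q)%N) (r0 : (0 < r)%N) (s0 : (0 < s)%N).

Definition tauP (x : freeM) : freeM := (tau p r x.1, tau q s x.2).

Lemma congF_tau x y : congF p q x y -> congF r s (tauP x) (tauP y).
Proof.
elim.
- move=> a b [l [-> ->]]; apply: rst_step; exists (tauP l).
  by rewrite /tauP /addF /= !addn0 tau_shift // tau_shift.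
- move=> a; exact: rst_refl.
- move=> a b _ h; exact: rst_sym.
- move=> a b c _ h1 _ h2; exact: rst_trans h1 h2.
Qed.

Lemma Tmap_cls x : Tmap p q r s (clsL p q x) = clsL r s (tauP x).
Proof.
rewrite /Tmap; apply: clsL_eq => //; apply: congF_tau; exact: repL_cls.
Qed.

Lemma Tmap_mono (a b : Lam p q) : leL a b -> leL (Tmap p q r s a) (Tmap p q r s b).
Proof.
move=> /(leLP p0 q0) [x [y [-> -> h1 h2]]]; rewrite !Tmap_cls.
by apply: leL_le => //; rewrite /tauP /=; apply: tau_mono.
Qed.

End Tm.

Lemma Tmap_zero p q r s (a : Lam p q) : (0 < p)%N -> (0 < q)%N -> (2 <= r)%N -> (2 <= s)%N ->
  Tmap p q r s a = zeroL r s -> a = zeroL p q.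
Proof.
move=> p0 q0 r2 s2; have [x ->] := LamP a.
have r0 : (0 < r)%N by lia. have s0 : (0 < s)%N by lia.
rewrite Tmap_cls // => /clsL_inj /(congF_deg r0 s0).
rewrite [X in _ = X]/degF /= !muln0 addn0 => /(degL0 r0 s0).
rewrite /tauP => -[/tau0 h1 /tau0 h2]; rewrite /zeroL; congr clsL.
by case: x h1 h2 => u v /= h1 h2; rewrite (h1 p0 r2) (h2 q0 s2).
Qed.

Local Open Scope classical_set_scope.
Local Open Scope ring_scope.


Definition fseq (T : choiceType) (A : set T) : seq T := finmap.enum_fset (fset_set A).

Lemma mem_fseq (T : choiceType) (A : set T) x : finite_set A -> (x \in fseq A) <-> A x.
Proof.
move=> fA; rewrite /fseq.
have := in_fset_set fA x.
move=> h; rewrite (_ : (x \in enum_fset _) = (x \in fset_set A)) // h.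
by rewrite in_setE.
Qed.

Lemma uniq_fseq (T : choiceType) (A : set T) : uniq (fseq A).
Proof. exact: finmap.fset_uniq. Qed.

Lemma fsum_fseq (R : realType) (T : choiceType) (A : set T) (F : T -> R) : finite_set A ->
  \sum_(x \in A) F x = \sum_(x <- fseq A) F x.
Proof. move=> fA; exact: fsbig_finite. Qed.

Lemma sum_pos_ex (R : realType) (T : eqType) (s : seq T) (F : T -> R) :
  0 < \sum_(x <- s) F x -> exists2 x, x \in s & 0 < F x.
Proof.
elim: s => [|a s IH]; first by rewrite big_nil ltxx.
rewrite big_cons => h.
have [ha|ha] := ltP 0 (F a); first by exists a => //; rewrite mem_head.
have : 0 < \sum_(x <- s) F x.
  rewrite ltNge; apply/negP => h2; move: h; rewrite ltNge => /negP; apply.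
  by rewrite -[leRHS](addr0 0); apply: lerD.
by move=> /IH [x xs hx]; exists x => //; rewrite in_cons xs orbT.
Qed.

Lemma sum_pick (R : realType) (T : eqType) (s : seq T) (a : T) (c : R) :
  uniq s -> a \in s -> \sum_(y <- s) (if a == y then c else 0) = c.
Proof.
elim: s => [|b s IH] //= /andP [bs us]; rewrite in_cons big_cons.
have [ab|ne] := eqVneq a b => /= h.
  subst b; rewrite big1_seq ?addr0 // => y /= ys.
  by have [e|//] := eqVneq a y; move: bs; rewrite e ys.
by rewrite IH // add0r.
Qed.

Section Gen.
Variables (R : realType) (V W : choiceType) (leV : V -> V -> Prop) (leW : W -> W -> Prop).
Variables (P : set V) (Q : set W).
Hypotheses (fP : finite_set P) (fQ : finite_set Q).

Definition push (f : V -> W) (w : V -> R) : W -> R :=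
  fun y => \sum_(x <- fseq P) (if f x == y then w x else 0).

Definition maps (f : V -> W) := forall x, P x -> Q (f x).
Definition mono (f : V -> W) := forall u v, P u -> P v -> leV u v -> leW (f u) (f v).

Lemma push_pos f w y : 0 < push f w y -> exists x, [/\ P x, f x = y & 0 < w x].
Proof.
move=> /sum_pos_ex [x /(mem_fseq _ fP) Px].
by have [e|ne] := eqVneq (f x) y => h; [exists x | rewrite ltxx in h].
Qed.

Lemma real_sum w : realization R leV P w -> \sum_(x <- fseq P) w x = 1.
Proof. by move=> [_ [_ [h _]]]; rewrite -fsum_fseq. Qed.

Lemma push_real f w : maps f -> mono f -> realization R leV P w ->
  realization R leW Q (push f w).
Proof.
move=> mf mof hw; have [w0 [wsupp [wsum wch]]] := hw.
split; [|split; [|split]].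
- by move=> y; apply: sumr_ge0 => x _; case: ifP.
- move=> y nQ; apply: big1_seq => x /= /(mem_fseq _ fP) Px.
  by case: eqP => // e; exfalso; apply: nQ; rewrite -e; exact: mf.
- rewrite fsum_fseq // /push exchange_big /= -(real_sum hw).
  apply: eq_big_seq => x /(mem_fseq _ fP) Px.
  apply: sum_pick; first exact: uniq_fseq.
  by apply/(mem_fseq _ fQ); exact: mf.
- move=> u v /push_pos [x [Px <- hx]] /push_pos [x' [Px' <- hx']].
  by case: (wch x x' hx hx') => h; [left|right]; apply: mof.
Qed.

Lemma push_ext f g w : (forall x, P x -> f x = g x) -> push f w = push g w.
Proof.
move=> h; apply/funext => y; apply: eq_big_seq => x /(mem_fseq _ fP) Px.
by rewrite h.
Qed.

Lemma cont_into (Z : topologicalType) (F : Z -> W -> R) :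
  (forall y, continuous (fun z => F z y)) -> continuous F.
Proof.
move=> h z.
apply/cvg_sup => i.
apply/cvg_image.
  by rewrite eqEsubset; split => y // _; exists (fun _ => y).
move=> U hU.
exists [set f : W -> R | U (f i)].
  exact: (h i z U hU).
by rewrite eqEsubset; split => y; [case=> f ? <-|move=> Uy; exists (fun _ => y)].
Qed.

End Gen.

Lemma push_id (R : realType) (V : choiceType) (leV : V -> V -> Prop) (P : set V)
  (fP : finite_set P) (w : V -> R) : realization R leV P w -> push P id w = w.
Proof.
move=> [w0 [wsupp _]]; apply/funext => y; rewrite /push.
have [Py|nPy] := pselect (P y).
  rewrite (eq_bigr (fun x => if y == x then w y else 0)).
    by apply: sum_pick; [exact: uniq_fseq | exact/(mem_fseq _ fP)].
  by move=> x _ /=; rewrite eq_sym; case: eqP => // ->.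
rewrite wsupp // big1_seq // => x /(mem_fseq _ fP) Px.
by case: eqP => // e; exfalso; apply: nPy; rewrite -e.
Qed.


Lemma fst_cont (S T : topologicalType) : continuous (@fst S T).
Proof. by move=> [x t]; exact: cvg_fst. Qed.
Lemma snd_cont (S T : topologicalType) : continuous (@snd S T).
Proof. by move=> [x t]; exact: cvg_snd. Qed.

Section Gen2.
Variables (R : realType) (V W : choiceType).
Variables (P : set V) (Q : set W).
Hypotheses (fP : finite_set P) (fQ : finite_set Q).

Lemma sum_cont (Z : topologicalType) (I : Type) (s : seq I) (G : I -> Z -> R) :
  (forall i, continuous (G i)) -> continuous (fun z => \sum_(i <- s) G i z).
Proof.
move=> h; elim: s => [|a s IH].
  by under eq_fun do rewrite big_nil; exact: cst_continuous.
under eq_fun do rewrite big_cons.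
by move=> z; apply: continuousD; [exact: h | exact: IH].
Qed.

Lemma push_cont (f : V -> W) : continuous (push P f : (V -> R) -> (W -> R)).
Proof.
apply: cont_into => y; apply: sum_cont => x.
case: eqP => _; first exact: proj_continuous.
exact: cst_continuous.
Qed.

Lemma push_comp (f : V -> W) (U : choiceType) (g : W -> U) (w : V -> R) :
  maps P Q f -> push Q g (push P f w) = push P (g \o f) w.
Proof.
move=> mf; apply/funext => z; rewrite /push.
transitivity (\sum_(y <- fseq Q) \sum_(x <- fseq P)
   (if g y == z then if f x == y then w x else 0 else 0)).
  by apply: eq_bigr => y _; case: ifP => // _; rewrite big1.
rewrite exchange_big /=; apply: eq_big_seq => x /(mem_fseq _ fP) Px.
rewrite (eq_bigr (fun y => if f x == y then (if g (f x) == z then w x else 0) else 0)).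
  apply: sum_pick; first exact: uniq_fseq.
  by apply/(mem_fseq _ fQ); exact: mf.
move=> y _; have [e|ne] := eqVneq (f x) y; first by rewrite e.
by case: ifP.
Qed.

End Gen2.

Lemma contD (R : realType) (Z : topologicalType) (a b : Z -> R) :
  continuous a -> continuous b -> continuous (fun z => a z + b z).
Proof. by move=> ha hb z; exact: (@continuousD _ _ _ a b z (ha z) (hb z)). Qed.
Lemma contB (R : realType) (Z : topologicalType) (a b : Z -> R) :
  continuous a -> continuous b -> continuous (fun z => a z - b z).
Proof. by move=> ha hb z; exact: (@continuousB _ _ _ a b z (ha z) (hb z)). Qed.
Lemma contM (R : realType) (Z : topologicalType) (a b : Z -> R) :
  continuous a -> continuous b -> continuous (fun z => a z * b z).
Proof. by move=> ha hb z; exact: (@continuousM _ _ a b z (ha z) (hb z)). Qed.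

Section GHs.
Variables (R : realType) (S T : topologicalType) (X : set S) (Y : set T).

Definition GH (F G : S -> T) := exists H : S * R -> T,
  [/\ continuous H, (forall x t, X x -> unitI R t -> Y (H (x, t))),
      (forall x, H (x, 0) = F x) & (forall x, H (x, 1) = G x)].

Lemma cont_pair (Z : topologicalType) (a : Z -> S) (b : Z -> R) :
  continuous a -> continuous b -> continuous (fun z => (a z, b z)).
Proof. by move=> ha hb z; exact: (cvg_pair (ha z) (hb z)). Qed.

Lemma GH_sym F G : GH F G -> GH G F.
Proof.
move=> [H [cH hY h0 h1]]; exists (fun z => H (z.1, 1 - z.2)); split.
- move=> z; apply: continuous_comp; last exact: cH.
  apply: cont_pair; first exact: fst_cont.
  by apply: contB; [exact: cst_continuous | exact: snd_cont].
- move=> x t Xx /andP [t0 t1]; apply: hY => //; rewrite /unitI /=.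
  by apply/andP; split; rewrite ?subr_ge0 ?gerBl.
- by move=> x /=; rewrite subr0.
- by move=> x /=; rewrite subrr.
Qed.

Lemma GH_trans F G K : GH F G -> GH G K -> GH F K.
Proof.
move=> [H1 [c1 hY1 a1 b1]] [H2 [c2 hY2 a2 b2]].
pose h := 2^-1 : R.
exists (fun z => if z.2 <= h then H1 (z.1, 2 * z.2) else H2 (z.1, 2 * z.2 - 1)); split.
- apply/continuous_subspace_setT.
  have -> : [set: S * R] = [set z | z.2 <= h] `|` [set z | h <= z.2].
    apply/seteqP; split => z //= _.
    by case: (lerP z.2 h) => hz; [left | right; exact: ltW].
  apply: withinU_continuous.
  + apply: (@preimage_closed _ _ snd [set x | x <= h]); last exact: closed_le.
    by move=> z _; exact: snd_cont.
  + apply: (@preimage_closed _ _ snd [set x | h <= x]); last exact: closed_ge.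
    by move=> z _; exact: snd_cont.
  + apply: (@subspace_eq_continuous _ [set z : S * R | z.2 <= h] _ (fun z => H1 (z.1, 2 * z.2))).
      by move=> z; rewrite in_setE /= => hz; rewrite /from_subspace hz.
    apply: continuous_subspaceT => z; apply: continuous_comp; last exact: c1.
    apply: cont_pair; first exact: fst_cont.
    by apply: contM; [exact: cst_continuous | exact: snd_cont].
  + apply: (@subspace_eq_continuous _ [set z : S * R | h <= z.2] _ (fun z => H2 (z.1, 2 * z.2 - 1))).
      move=> z; rewrite in_setE /= => hz; rewrite /from_subspace.
      case: ifP => // hz'; have -> : z.2 = h by apply/eqP; rewrite eq_le hz hz'.
      by rewrite /h divff // subrr b1 a2.
    apply: continuous_subspaceT => z; apply: continuous_comp; last exact: c2.
    apply: cont_pair; first exact: fst_cont.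
    apply: contB; last exact: cst_continuous.
    by apply: contM; [exact: cst_continuous | exact: snd_cont].
- move=> x t Xx /= /andP [t0 t1]; case: ifP => ht.
    by apply: hY1 => //; apply/andP; rewrite /h in ht; split; lra.
  apply: hY2 => //; move/negbT: ht; rewrite -ltNge /h => ht.
  by apply/andP; split; lra.
- by move=> x /=; rewrite ifT ?mulr0 ?a1 // /h; lra.
- move=> x /=; rewrite ifF ?b2 //; last by apply/negbTE; rewrite -ltNge /h; lra.
  by rewrite mulr1 (_ : 2 - 1 = 1 :> R) ?b2 //; lra.
Qed.

End GHs.

Lemma count_lt (T : eqType) (a b : pred T) (s : seq T) z :
  (forall x, a x -> b x) -> z \in s -> b z -> ~~ a z -> (count a s < count b s)%N.
Proof.
move=> ab; elim: s => [//|y s IH]; rewrite in_cons => /orP [/eqP ->|zs] bz naz /=.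
  rewrite (negbTE naz) bz add0n add1n ltnS; exact: sub_count.
have := IH zs bz naz; case: (a y) (ab y) => [-> //|_] h.
change (count a s < b y + count b s)%N; apply: (leq_trans h); exact: leq_addl.
Qed.

Lemma exists_max (T : eqType) (rk : T -> nat) (s : seq T) :
  s != [::] -> exists2 z, z \in s & forall y, y \in s -> (rk y <= rk z)%N.
Proof.
elim: s => [//|a s IH] _.
have [->|ne] := eqVneq s [::].
  by exists a; rewrite ?mem_head // => y; rewrite in_cons in_nil orbF => /eqP ->.
have [z zs hz] := IH ne.
have [le|lt] := leqP (rk a) (rk z).
  exists z; first by rewrite in_cons zs orbT.
  by move=> y; rewrite in_cons => /orP [/eqP ->//|]; exact: hz.
exists a; first exact: mem_head.
move=> y; rewrite in_cons => /orP [/eqP ->//|/hz h]; exact: leq_trans h (ltnW lt).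
Qed.

Section Quillen.
Variables (R : realType) (V W : choiceType) (leV : V -> V -> Prop) (leW : W -> W -> Prop).
Variables (P : set V) (Q : set W).
Hypotheses (fP : finite_set P) (fQ : finite_set Q).
Local Notation X := (realization R leV P).
Local Notation Y := (realization R leW Q).

Lemma coord_cont (Z : topologicalType) (F : Z -> W -> R) y :
  continuous F -> continuous (fun z => F z y).
Proof. by move=> h z; exact: (continuous_comp (h z) (@proj_continuous W (fun _ => R) y (F z))). Qed.

Lemma SL f g : maps P Q f -> maps P Q g -> mono leV leW P f -> mono leV leW P g ->
  (forall x x', P x -> P x' -> leV x x' \/ leV x' x -> leW (f x) (g x') \/ leW (g x') (f x)) ->
  GH R X Y (push P f) (push P g).
Proof.
move=> mf mg mof mog hfg.
exists (fun z => fun y => (1 - z.2) * push P f z.1 y + z.2 * push P g z.1 y); split.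
- apply: cont_into => y; apply: contD; apply: contM.
  + by apply: contB; [exact: cst_continuous | exact: snd_cont].
  + apply: (coord_cont (F := fun z : (V -> R) * R => push P f z.1)).
    by move=> z; apply: continuous_comp; [exact: fst_cont | exact: push_cont].
  + exact: snd_cont.
  + apply: (coord_cont (F := fun z : (V -> R) * R => push P g z.1)).
    by move=> z; apply: continuous_comp; [exact: fst_cont | exact: push_cont].
- move=> w t Xw /andP [t0 t1] /=.
  have Yf := push_real fP fQ mf mof Xw; have Yg := push_real fP fQ mg mog Xw.
  have [f0 [fs [fsum _]]] := Yf; have [g0 [gs [gsum _]]] := Yg.
  have [w0 [_ [_ wch]]] := Xw.
  split; [|split; [|split]].
  + move=> y; apply: addr_ge0; apply: mulr_ge0 => //; by rewrite subr_ge0.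
  + by move=> y nQ; rewrite fs // gs // !mulr0 addr0.
  + rewrite fsum_fseq // big_split /= -!mulr_sumr -!fsum_fseq // fsum gsum.
    by rewrite !mulr1 subrK.
  + have key : forall y, 0 < (1 - t) * push P f w y + t * push P g w y ->
        exists x, [/\ P x, 0 < w x & (f x = y \/ g x = y)].
      move=> y hy.
      have [hf|hf] := ltP 0 (push P f w y).
        by have [x [Px <- wx]] := push_pos fP hf; exists x; split => //; left.
      have [hg|hg] := ltP 0 (push P g w y).
        by have [x [Px <- wx]] := push_pos fP hg; exists x; split => //; right.
      exfalso; move: hy; rewrite ltNge => /negP; apply.
      rewrite -[0](addr0 0); apply: lerD.
        by apply: mulr_ge0_le0 => //; rewrite subr_ge0.
      exact: mulr_ge0_le0.
    move=> u v /key [x [Px wx hu]] /key [x' [Px' wx' hv]].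
    have c := wch x x' wx wx'.
    case: hu => <-; case: hv => <-.
    * by case: c => h; [left|right]; apply: mof.
    * exact: hfg.
    * by have := hfg x' x Px' Px (proj1 (or_comm (leV x x') (leV x' x)) c) => -[h|h]; [right|left].
    * by case: c => h; [left|right]; apply: mog.
- by move=> w; apply/funext => y /=; rewrite subr0 mul1r mul0r addr0.
- by move=> w; apply/funext => y /=; rewrite subrr mul0r mul1r add0r.
Qed.

Lemma GH_push_refl f : maps P Q f -> mono leV leW P f -> GH R X Y (push P f) (push P f).
Proof.
move=> mf mof; apply: SL => // x x' Px Px' [h|h]; [left|right]; exact: mof.
Qed.

Hypotheses (reflW : forall y, leW y y) (transW : forall a b c, leW a b -> leW b c -> leW a c).
Variable rk : V -> nat.
Hypothesis rkP : forall u v, P u -> P v -> leV u v -> u <> v -> (rk u < rk v)%N.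

Lemma QL g : maps P Q g -> mono leV leW P g ->
  forall n f, (count (fun x => f x != g x) (fseq P) <= n)%N ->
  maps P Q f -> mono leV leW P f -> (forall x, P x -> leW (f x) (g x)) ->
  GH R X Y (push P f) (push P g).
Proof.
move=> mg mog n; elim: n => [|n IH] f hc mf mof fg.
  have e : push (R:=R) P f = push P g.
    apply: boolp.funext => w; apply: (push_ext fP) => x Px.
    have xP : x \in fseq P by apply/(mem_fseq _ fP).
    apply/eqP; apply: contraTT hc => ne; rewrite -ltnNge -has_count.
    by apply/hasP; exists x.
  by rewrite -e; exact: GH_push_refl.
have [hd|nhd] := boolP (has (fun x => f x != g x) (fseq P)); last first.
  have e : push (R:=R) P f = push P g.
    apply: boolp.funext => w; apply: (push_ext fP) => x Px.
    have xP : x \in fseq P by apply/(mem_fseq _ fP).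
    apply/eqP; apply: contraNT nhd => ne; by apply/hasP; exists x.
  by rewrite -e; exact: GH_push_refl.
have : [seq x <- fseq P | f x != g x] != [::].
  by move: hd; rewrite has_filter.
move=> /(exists_max rk) [z]; rewrite mem_filter => /andP [fgz zP] zmax.
have Pz : P z by apply/(mem_fseq _ fP).
have above : forall y, P y -> leV z y -> y <> z -> f y = g y.
  move=> y Py zy yz; apply/eqP; apply: contraT => ne.
  have := zmax y; rewrite mem_filter ne /= => /(_ (proj2 (mem_fseq _ fP) Py)).
  by rewrite leqNgt (rkP Pz Py zy (nesym yz)).
pose f' := fun x => if x == z then g z else f x.
have mf' : maps P Q f' by move=> x Px; rewrite /f'; case: ifP => _; [exact: mg|exact: mf].
have mof' : mono leV leW P f'.
  move=> u v Pu Pv uv; rewrite /f'.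
  case: (u == z) / eqP => [eu|uz]; case: (v == z) / eqP => [ev|vz].
  - by subst; exact: reflW.
  - by subst u; rewrite (above v Pv uv vz); exact: mog.
  - by subst v; apply: transW (mof _ _ Pu Pz uv) (fg _ Pz).
  - exact: mof.
apply: (GH_trans (G := push P f')).
  apply: SL => // x x' Px Px' c; rewrite /f'.
  case: (x' == z) / eqP => [ex'|x'z].
    subst x'; case: (x == z) / eqP => [ex|xz]; first by subst; left; exact: fg.
    case: c => c.
      by left; apply: transW (mof _ _ Px Pz c) (fg _ Pz).
    by right; rewrite (above x Px c xz); exact: mog.
  by case: c => c; [left|right]; apply: mof.
apply: IH => //.
- rewrite -ltnS; apply: leq_trans hc.
  apply: (count_lt (z := z)) => //.
  + move=> x; rewrite /f'; case: (x == z) / eqP => [->|//].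
    by rewrite eqxx.
  + rewrite /f'; case: ifP => [_|/eqP //]; by apply/negPn/eqP.
- move=> x Px; rewrite /f'; case: (x == z) / eqP => [->|_]; [exact: reflW|exact: fg].
Qed.

End Quillen.


Lemma GH_hom (R : realType) (S T : topologicalType) (X : set S) (Y : set T) F G F' G' :
  GH R X Y F G -> (forall x, X x -> F' x = F x) -> (forall x, X x -> G' x = G x) ->
  homotopic_on R X Y F' G'.
Proof.
move=> [H [cH hY h0 h1]] eF eG; exists H; split; [|split; [|split]].
- exact: continuous_subspaceT.
- by move=> x t Xx It; exact: hY.
- by move=> x Xx; rewrite h0 eF.
- by move=> x Xx; rewrite h1 eG.
Qed.

Section Main.
Variables (R : realType) (p q : nat).
Hypotheses (hp : (2 <= p)%N) (hq : (2 <= q)%N).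
Let p0 : (0 < p)%N. Proof. by apply: leq_trans hp. Qed.
Let q0 : (0 < q)%N. Proof. by apply: leq_trans hq. Qed.
Let t0 : (0 < 2)%N. Proof. by []. Qed.
Let t2 : (2 <= 2)%N. Proof. by []. Qed.

Local Notation T := (Tmap p q 2 2).
Local Notation T' := (Tmap 2 2 p q).

Lemma cle (a : Lam p q) : leL (T' (T a)) a.
Proof.
have [x ->] := LamP a; rewrite Tmap_cls // Tmap_cls //.
apply: leL_le => //; rewrite /tauP /=; exact: tau_c1.
Qed.

Lemma TT' (b : Lam 2 2) : T (T' b) = b.
Proof.
have [y ->] := LamP b; rewrite Tmap_cls // Tmap_cls //.
by rewrite /tauP /= !tau_c2 //; case: y.
Qed.

Lemma T0 (a : Lam p q) : T a = zeroL 2 2 -> a = zeroL p q.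
Proof. exact: Tmap_zero. Qed.

Lemma T'0 (b : Lam 2 2) : T' b = zeroL p q -> b = zeroL 2 2.
Proof. exact: Tmap_zero. Qed.

Lemma c0 (a : Lam p q) : T' (T a) = zeroL p q -> a = zeroL p q.
Proof. by move=> /T'0 /T0. Qed.

Lemma ltL0 r s (a : Lam r s) : (0 < r)%N -> (0 < s)%N -> a <> zeroL r s -> ltL (zeroL r s) a.
Proof. by move=> r0 s0 ne; split; [exact: zero_le | exact: nesym]. Qed.

Variable lam : Lam p q.
Hypothesis hlam : lam <> zeroL p q.

Local Notation P := (ointL (zeroL p q) lam).
Local Notation Q := (ointL (zeroL 2 2) (T lam)).

Lemma finP : finite_set P.
Proof.
apply: (sub_finite_set _ (finite_below p0 q0 lam)); by move=> m [_ [h _]].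
Qed.

Lemma finQ : finite_set Q.
Proof.
apply: (sub_finite_set _ (finite_below t0 t0 (T lam))); by move=> m [_ [h _]].
Qed.

Lemma PP m : P m -> [/\ m <> zeroL p q, leL m lam & m <> lam].
Proof. by move=> [[_ h1] [h2 h3]]; split => // e; apply: h1; rewrite e. Qed.

Lemma rkP u v : P u -> P v -> leL u v -> u <> v -> (degL u < degL v)%N.
Proof. by move=> _ _; exact: degL_lt. Qed.

Lemma rkQ u v : Q u -> Q v -> leL u v -> u <> v -> (degL u < degL v)%N.
Proof. by move=> _ _; exact: degL_lt. Qed.

Lemma maps_c : maps P P (fun a => T' (T a)).
Proof.
move=> m /PP [m0 ml ml']; split; first apply: ltL0 => // /c0 //.
split; first exact: leL_trans (cle m) ml.
move=> e; apply: ml'; apply: leL_antisym => //; rewrite -[in X in leL X _]e; exact: cle.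
Qed.

Lemma mono_c : mono (@leL p q) (@leL p q) P (fun a => T' (T a)).
Proof. by move=> u v _ _ uv; apply: Tmap_mono => //; apply: Tmap_mono. Qed.

Lemma maps_id : maps P P id.
Proof. by []. Qed.
Lemma mono_id : mono (@leL p q) (@leL p q) P id.
Proof. by []. Qed.

Lemma hom_c_id : GH R (realization R (@leL p q) P) (realization R (@leL p q) P)
  (push P (fun a => T' (T a))) (push P id).
Proof.
apply: (QL R finP finP (@leL_refl _ _ p0 q0) (@leL_trans _ _ p0 q0) rkP maps_id mono_id).
- exact: count_size.
- exact: maps_c.
- exact: mono_c.
- by move=> x _; exact: cle.
Qed.

Lemma mono_T : mono (@leL p q) (@leL 2 2) P T.
Proof. by move=> u v _ _ uv; apply: Tmap_mono. Qed.
Lemma mono_T' : mono (@leL 2 2) (@leL p q) Q T'.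
Proof. by move=> u v _ _ uv; apply: Tmap_mono. Qed.

Section Fixed.
Hypothesis hfix : T' (T lam) = lam.

Lemma maps_T : maps P Q T.
Proof.
move=> m /PP [m0 ml ml']; split; first by apply: ltL0 => // /T0.
split; first exact: Tmap_mono.
move=> e; apply: ml'; apply: leL_antisym => //.
have := cle m; rewrite e hfix; exact.
Qed.

Lemma maps_T' : maps Q P T'.
Proof.
move=> m [[_ m0] [ml ml']]; split; first by apply: ltL0 => // /T'0 e; apply: m0.
split; first by rewrite -hfix; exact: Tmap_mono.
by move=> e; apply: ml'; rewrite -e TT'.
Qed.

Lemma fixed_case : homotopy_equivalent R (Frob R lam) (Frob R (T lam)).
Proof.
rewrite /Frob.
exists (push P T), (push Q T'); split; [|split; [|split; [|split; [|split]]]].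
- exact/continuous_subspaceT/push_cont.
- by move=> _ [w Xw <-]; apply: (push_real finP finQ maps_T mono_T).
- exact/continuous_subspaceT/push_cont.
- by move=> _ [w Yw <-]; apply: (push_real finQ finP maps_T' mono_T').
- apply: (GH_hom hom_c_id).
  + by move=> w Xw /=; rewrite (push_comp finP finQ _ _ maps_T).
  + by move=> w Xw /=; rewrite (push_id finP Xw).
- apply: (GH_hom (GH_push_refl R finQ finQ (f := id) (leV := @leL 2 2) (leW := @leL 2 2) _ _)).
  + by [].
  + by [].
  + move=> w Yw /=; rewrite (push_comp finQ finP _ _ maps_T') (push_id finQ Yw).
    rewrite -{2}(push_id finQ Yw); apply: (push_ext finQ) => x _ /=; exact: TT'.
  + by move=> w Yw /=; rewrite (push_id finQ Yw).
Qed.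

End Fixed.

Section NonFixed.
Hypothesis hnf : T' (T lam) <> lam.

Let cl := T' (T lam).

Lemma Pcl : P cl.
Proof.
split; first by apply: ltL0 => // /c0.
by split; [exact: cle | exact: hnf].
Qed.

Definition w0 : Lam p q -> R := fun v => if v == cl then 1 else 0.

Lemma Xw0 : realization R (@leL p q) P w0.
Proof.
split; [|split; [|split]].
- by move=> v; rewrite /w0; case: ifP.
- move=> v nP; rewrite /w0; case: (v == cl) / eqP => // e.
  by exfalso; apply: nP; rewrite e; exact: Pcl.
- rewrite (fsum_fseq _ finP) (eq_bigr (fun x => if cl == x then 1 else 0)).
    apply: sum_pick; first exact: uniq_fseq.
    by apply/(mem_fseq _ finP); exact: Pcl.
  by move=> x _; rewrite /w0 eq_sym.
- move=> u v; rewrite /w0.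
  case: (u == cl) / eqP => [->|_]; last by rewrite ltxx.
  case: (v == cl) / eqP => [->|_]; last by rewrite ltxx.
  by left; exact: leL_refl.
Qed.

Lemma push_cst w : realization R (@leL p q) P w -> push P (fun _ => cl) w = w0.
Proof.
move=> Xw; apply: boolp.funext => y; rewrite /push /w0.
have := real_sum finP Xw; rewrite eq_sym.
by case: (y == cl) => [<-|_]; [|rewrite big1].
Qed.

Lemma maps_cst : maps P P (fun _ => cl).
Proof. by move=> _ _; exact: Pcl. Qed.
Lemma mono_cst : mono (@leL p q) (@leL p q) P (fun _ => cl).
Proof. by move=> u v _ _ _; exact: leL_refl. Qed.

Lemma hom_c_cst : GH R (realization R (@leL p q) P) (realization R (@leL p q) P)
  (push P (fun a => T' (T a))) (push P (fun _ => cl)).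
Proof.
apply: (QL R finP finP (@leL_refl _ _ p0 q0) (@leL_trans _ _ p0 q0) rkP maps_cst mono_cst).
- exact: count_size.
- exact: maps_c.
- exact: mono_c.
- by move=> x /PP [_ xl _]; apply: Tmap_mono => //; apply: Tmap_mono.
Qed.

Lemma nonfixed_case : homotopy_equivalent R (Frob R lam) (pt R).
Proof.
rewrite /Frob.
exists (fun _ => 0 : R), (fun _ => w0); split; [|split; [|split; [|split; [|split]]]].
- exact/continuous_subspaceT/cst_continuous.
- by move=> _ [w _ <-].
- exact/continuous_subspaceT/cst_continuous.
- by move=> _ [w _ <-]; exact: Xw0.
- apply: (GH_hom (GH_trans (GH_sym hom_c_cst) hom_c_id)).
  + by move=> w Xw /=; rewrite push_cst.
  + by move=> w Xw /=; rewrite (push_id finP Xw).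
- exists (fun _ => 0); split; [|split; [|split]].
  + exact/continuous_subspaceT/cst_continuous.
  + by [].
  + by [].
  + by move=> x ->.
Qed.

End NonFixed.

End Main.

Theorem theorem2p5 (R : realType) (p q : nat) (hp : (2 <= p)%N) (hq : (2 <= q)%N)
    (lam : Lam p q) (hlam : lam <> zeroL p q) :
  (Tmap 2 2 p q (Tmap p q 2 2 lam) = lam ->
     homotopy_equivalent R (Frob R lam) (Frob R (Tmap p q 2 2 lam))) /\
  (Tmap 2 2 p q (Tmap p q 2 2 lam) <> lam ->
     homotopy_equivalent R (Frob R lam) (pt R)).
Proof.
split => h.
- exact: fixed_case.
- exact: nonfixed_case.
Qed.
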